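(* Let $\gamma$ be an $\mathbb{F}$-functorial and $\varphi=\gamma^{(i)}$ for some $i\in\mathbb{N}$. Then $\varphi$ is an $\mathbb{F}$-functorial; moreover, if $\gamma$ is idempotent, then $\varphi$ is an idempotent $\mathbb{F}$-functorial.
   Context: All groups are finite. A functorial is a function $\theta$ assigning to each group $G$ a characteristic subgroup $\theta(G)$ such that $f(\theta(G))=\theta(f(G))$ for every isomorphism $f:G\to G^*$. An $\mathbb{F}$-functorial is a functorial $\gamma$ satisfying, for every group $G$: (F1) $f(\gamma(G))\subseteq\gamma(f(G))$ for every epimorphism $f:G\to G^*$; (F2) $\gamma(N)\subseteq\gamma(G)$ for every $N\trianglelefteq G$; (F3) $C_G(\gamma(G))\subseteq\gamma(G)$; (F4) $\gamma(G)/\Phi(G)\subseteq\mathrm{Soc}(G/\Phi(G))$. $\gamma$ is idempotent if $\gamma(\gamma(G))=\gamma(G)$ for all $G$. $\gamma^{(1)}=\gamma$ and $\gamma^{(i+1)}(G)=\gamma(\gamma^{(i)}(G))$. *)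

(* Defs.v *)
From mathcomp Require Import all_boot all_fingroup all_solvable.
Set Implicit Arguments. Unset Strict Implicit. Unset Printing Implicit Defensive.
Local Open Scope group_scope.

Definition gassign := forall gT : finGroupType, {group gT} -> {group gT}.

Definition socle (gT : finGroupType) (G : {set gT}) : {set gT} :=
  <<\bigcup_(M : {group gT} | minnormal M G && (M \subset G)) M>>.

Definition functorial (theta : gassign) : Prop :=
  forall (gT : finGroupType) (G : {group gT}),
    theta gT G \char G /\
    forall (rT : finGroupType) (f : {morphism G >-> rT}),
      'injm f -> f @* theta gT G = theta rT (f @* G)%G.

Definition F_functorial (gamma : gassign) : Prop :=
  functorial gamma /\
  forall (gT : finGroupType) (G : {group gT}),
    [/\ forall (rT : finGroupType) (f : {morphism G >-> rT}),
                   f @* gamma gT G \subset gamma rT (f @* G)%G,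
        forall N : {group gT}, N <| G -> gamma gT N \subset gamma gT G,
        'C_G(gamma gT G) \subset gamma gT G
      & gamma gT G / 'Phi(G) \subset socle (G / 'Phi(G))].

Definition idempotent_f (gamma : gassign) : Prop :=
  forall (gT : finGroupType) (G : {group gT}), gamma gT (gamma gT G) = gamma gT G.

Fixpoint giter (gamma : gassign) (i : nat) : gassign :=
  match i with
  | 0 => fun (gT : finGroupType) (G : {group gT}) => G
  | i'.+1 => fun (gT : finGroupType) (G : {group gT}) => gamma gT (@giter gamma i' gT G)
  end.

(* Main.v *)
Require Import Defs.
From mathcomp Require Import all_boot all_fingroup all_solvable.
Set Implicit Arguments. Unset Strict Implicit. Unset Printing Implicit Defensive.
Local Open Scope group_scope.

Lemma Fcomp (gamma phi : gassign) :
  F_functorial gamma -> F_functorial phi ->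
  F_functorial (fun gT G => gamma gT (phi gT G)).
Proof.
move=> [gfun gF] [pfun pF].
have gch gT G := (gfun gT G).1.
have giso gT G := (gfun gT G).2.
have pch gT G := (pfun gT G).1.
have piso gT G := (pfun gT G).2.
have restr_eq : forall (gT rT : finGroupType) (G : {group gT})
   (f : {morphism G >-> rT}),
   'injm f -> f @* gamma gT (phi gT G) = gamma rT (phi rT (f @* G)%G).
  move=> gT rT G f inj.
  have sHG : phi gT G \subset G by apply: char_sub; exact: pch.
  have -> : f @* gamma gT (phi gT G) = restrm sHG f @* gamma gT (phi gT G).
    rewrite morphim_restrm (setIidPr _) //.
    by apply: char_sub; exact: gch.
  rewrite (giso _ _ _ (restrm sHG f) (injm_restrm sHG inj)).
  congr (gval (gamma rT _)); apply: group_inj => /=.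
  by rewrite morphim_restrm setIid piso.
split.
  move=> gT G; split; last by move=> rT f inj; exact: restr_eq.
  exact: (char_trans (gch gT (phi gT G)) (pch gT G)).
move=> gT G.
have pchG := pch gT G.
have gchH := gch gT (phi gT G).
have sKH := char_sub gchH.
have sHG := char_sub pchG.
have [pF1 pF2 pF3 pF4] := pF gT G.
have [gF1 gF2 gF3 gF4] := gF gT (phi gT G).
split.
- move=> rT f.
  have sfH : f @* phi gT G \subset phi rT (f @* G)%G := pF1 rT f.
  have nfH : (f @* phi gT G)%G <| phi rT (f @* G)%G.
    apply: normalS sfH _ _.
      by apply: char_sub; exact: pch.
    exact: morphim_normal (char_normal pchG).
  have [_ g2 _ _] := gF rT (phi rT (f @* G)%G).
  apply: subset_trans (g2 _ nfH).
  have eqg : (restrm sHG f @* phi gT G)%G = (f @* phi gT G)%G.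
    by apply: group_inj; rewrite /= morphim_restrm setIid.
  have := gF1 rT (restrm sHG f).
  by rewrite eqg morphim_restrm (setIidPr sKH).
- move=> N nNG.
  have [_ pN2 _ _] := pF gT N.
  have nphiN : phi gT N <| phi gT G.
    apply: normalS (pF2 N nNG) sHG _.
    exact: char_normal_trans (pch gT N) nNG.
  exact: gF2.
- set K := gamma gT (phi gT G).
  have KchG : K \char G := char_trans gchH pchG.
  have nCG : 'C_G(K) <| G.
    have := subcent_normal G K.
    by rewrite (setIidPl (normal_norm (char_normal KchG))).
  have [_ _ cF3 _] := pF gT ('C_G(K))%G.
  have [_ sPC _ _] := pF gT G.
  have s1 : phi gT ('C_G(K))%G \subset 'C_(phi gT G)(K).
    rewrite subsetI (pF2 _ nCG) /=.
    apply: subset_trans (char_sub (pch gT _)) _.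
    exact: subsetIr.
  have s2 : phi gT ('C_G(K))%G \subset K := subset_trans s1 gF3.
  apply: subset_trans (s2).
  apply: subset_trans cF3.
  rewrite subsetI subxx /=.
  apply: subset_trans (subsetIr _ _) _.
  apply/centsP => x Hx y Hy; have yK : y \in K := subsetP s2 y Hy. by have := centP Hx y yK.
- apply: subset_trans pF4.
  exact: quotientS.
Qed.

Theorem corollary1 (gamma : gassign) (i : nat) :
  F_functorial gamma -> 0 < i ->
  F_functorial (@giter gamma i) /\
  (idempotent_f gamma -> idempotent_f (@giter gamma i)).
Proof.
move=> Fg; case: i => // n _.
have E : idempotent_f gamma -> forall gT G, @giter gamma n.+1 gT G = gamma gT G.
  move=> idg gT G; elim: n => //= n IH.
  by rewrite IH idg.
split.
  clear E; elim: n => [|n IH] //.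
  exact: (Fcomp Fg IH).
move=> idg gT G.
by rewrite !(E idg) idg.
Qed.
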